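(* Let $\Gamma$ be a locally finite connected $\delta$-hyperbolic graph with base vertex $x_0$, let $n\ge0$, let $A\in\mathcal{A}_n(\Gamma)$, and let $x\in\Gamma$. Then $x\in A$ if and only if both of the following hold: (1) $x\in C(p)$ for every $p\in N(A,B_n)$; (2) $d_x$ and $d_A$ differ by a constant on $P(A,S_n)$.
   Context: $\Gamma$ is identified with its vertex set with path metric $d$; $d_x(y)=d(x,y)$. $\delta$-hyperbolic means: for every geodesic triangle with sides $[a,b],[a,c],[b,c]$ and every vertex $v\in[a,b]$ there is a vertex $w\in[a,c]\cup[b,c]$ with $d(v,w)\le\delta$. Write $\ell(x)=d(x_0,x)$, $B_n=\{\ell\le n\}$, $S_n=\{\ell=n\}$, and let $C(p)=\{y:\ell(y)=\ell(p)+d(p,y)\}$ be the cone on $p$. For finite $B$, the atom of $x$ is $\{y: d_y-d_x \text{ is constant on } B\}$; $\mathcal{A}(B)$ is the set of atoms, and $\mathcal{A}_n(\Gamma)$ is the set of infinite atoms of $\mathcal{A}(B_n)$. For an atom $A$, $d_A$ means $d_y|_{B_n}$ for any $y\in A$ (well defined up to an additive constant). For finite $B$ and $y\in\Gamma$, $N(y,B)$ is the set of $p\in B$ with $d(p,y)\le d(q,y)$ for all $q\in B$. For $\ell(y)\ge n$, a point $p\in S_n$ is proximal to $y$ if there is a geodesic $p_0,\ldots,p_n$ from $x_0$ to $p$ such that $d(y_i,p_i)\le4\delta+2$ for all $i\le n$ and every geodesic $y_0=x_0,y_1,\ldots,y_{\ell(y)}=y$ from $x_0$ to $y$; $P(y,S_n)$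 is the set of such points. The sets $N(y,B_n)$ and $P(y,S_n)$ are the same for all $y\in A$, and are denoted $N(A,B_n)$ and $P(A,S_n)$. *)

(* Defs.v *)
From Stdlib Require Import Reals ZArith List.
Open Scope R_scope.

Section Graphs.
Context {V : Type}.

Definition walk (adj : V -> V -> Prop) (g : nat -> V) (k : nat) (a b : V) : Prop :=
  g 0%nat = a /\ g k = b /\ (forall i, (i < k)%nat -> adj (g i) (g (S i))).

Definition graph_symmetric (adj : V -> V -> Prop) := forall x y, adj x y -> adj y x.
Definition graph_irreflexive (adj : V -> V -> Prop) := forall x, ~ adj x x.

Definition locally_finite (adj : V -> V -> Prop) : Prop :=
  forall x, exists l : list V, forall y, adj x y -> In y l.

Definition connected (adj : V -> V -> Prop) : Prop :=
  forall a b, exists g k, walk adj g k a b.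

Definition path_metric (adj : V -> V -> Prop) (d : V -> V -> nat) : Prop :=
  forall a b m, (d a b <= m)%nat <-> exists g k, (k <= m)%nat /\ walk adj g k a b.

Definition geodesic (adj : V -> V -> Prop) (d : V -> V -> nat)
  (g : nat -> V) (k : nat) (a b : V) : Prop :=
  walk adj g k a b /\ k = d a b.

Definition hyperbolic (adj : V -> V -> Prop) (d : V -> V -> nat) (delta : R) : Prop :=
  forall a b c gab kab gac kac gbc kbc,
    geodesic adj d gab kab a b -> geodesic adj d gac kac a c ->
    geodesic adj d gbc kbc b c ->
    forall i, (i <= kab)%nat ->
      exists j, ((j <= kac)%nat /\ INR (d (gab i) (gac j)) <= delta)
             \/ ((j <= kbc)%nat /\ INR (d (gab i) (gbc j)) <= delta).

Definition ball (d : V -> V -> nat) (x0 : V) (n : nat) : V -> Prop :=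
  fun b => (d x0 b <= n)%nat.
Definition sphere (d : V -> V -> nat) (x0 : V) (n : nat) : V -> Prop :=
  fun b => d x0 b = n.

Definition cone (d : V -> V -> nat) (x0 p : V) : V -> Prop :=
  fun y => d x0 y = (d x0 p + d p y)%nat.

Definition atom (d : V -> V -> nat) (B : V -> Prop) (x : V) : V -> Prop :=
  fun y => exists c : Z, forall b, B b -> (Z.of_nat (d y b) - Z.of_nat (d x b))%Z = c.

Definition finite_set (A : V -> Prop) : Prop :=
  exists l : list V, forall y, A y -> In y l.

Definition infinite_atom (d : V -> V -> nat) (x0 : V) (n : nat) (A : V -> Prop) : Prop :=
  (exists z, forall y, A y <-> atom d (ball d x0 n) z y) /\ ~ finite_set A.

Definition nearest (d : V -> V -> nat) (B : V -> Prop) (y : V) : V -> Prop :=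
  fun p => B p /\ forall q, B q -> (d p y <= d q y)%nat.

Definition proximal (adj : V -> V -> Prop) (d : V -> V -> nat) (delta : R)
  (x0 : V) (n : nat) (y : V) : V -> Prop :=
  fun p => sphere d x0 n p /\
    exists gp, geodesic adj d gp n x0 p /\
      forall gy, geodesic adj d gy (d x0 y) x0 y ->
        forall i, (i <= n)%nat -> INR (d (gy i) (gp i)) <= 4 * delta + 2.

End Graphs.

(* Main.v *)
Require Import Defs.
From Stdlib Require Import Reals ZArith List.
From Stdlib Require Import Lia Lra Classical.
Open Scope R_scope.
Open Scope nat_scope.

Lemma walk_le {V} (adj : V -> V -> Prop) d : path_metric adj d ->
  forall g k a b, walk adj g k a b -> d a b <= k.
Proof. intros Hm g k a b Hw. apply (proj2 (Hm a b k)). exists g, k. split; [lia|exact Hw]. Qed.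

Lemma walk_ex {V} (adj : V -> V -> Prop) d : path_metric adj d ->
  forall a b, exists g, walk adj g (d a b) a b.
Proof.
  intros Hm a b. destruct (proj1 (Hm a b (d a b)) (le_n _)) as [g [k [Hk Hw]]].
  pose proof (walk_le adj d Hm g k a b Hw). replace (d a b) with k by lia. eauto.
Qed.

Lemma geo_ex {V} (adj : V -> V -> Prop) d : path_metric adj d ->
  forall a b, exists g, geodesic adj d g (d a b) a b.
Proof. intros Hm a b. destruct (walk_ex adj d Hm a b) as [g Hg]. exists g. split; auto. Qed.

Lemma d_refl {V} (adj : V -> V -> Prop) d : path_metric adj d -> forall a, d a a = 0.
Proof.
  intros Hm a. assert (d a a <= 0); [|lia].
  apply (walk_le adj d Hm (fun _ => a)). split; [reflexivity|split;[reflexivity|intros; lia]].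
Qed.

Lemma d_zero {V} (adj : V -> V -> Prop) d : path_metric adj d -> forall a b, d a b = 0 -> a = b.
Proof.
  intros Hm a b H. destruct (walk_ex adj d Hm a b) as [g [H0 [H1 _]]]. rewrite H in H1. congruence.
Qed.

Lemma walk_rev {V} (adj : V -> V -> Prop) : graph_symmetric adj ->
  forall g k a b, walk adj g k a b -> walk adj (fun i => g (k - i)) k b a.
Proof.
  intros Hs g k a b [H0 [H1 H2]]. split; [|split].
  - rewrite Nat.sub_0_r. exact H1.
  - rewrite Nat.sub_diag. exact H0.
  - intros i Hi. apply Hs. replace (k - i) with (S (k - S i)) by lia. apply H2. lia.
Qed.

Lemma d_sym {V} (adj : V -> V -> Prop) d : graph_symmetric adj -> path_metric adj d ->
  forall a b, d a b = d b a.
Proof.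
  intros Hs Hm.
  assert (forall a b, d b a <= d a b).
  { intros a b. destruct (walk_ex adj d Hm a b) as [g Hg].
    exact (walk_le adj d Hm _ _ _ _ (walk_rev adj Hs _ _ _ _ Hg)). }
  intros a b. pose proof (H a b). pose proof (H b a). lia.
Qed.

Lemma walk_cat {V} (adj : V -> V -> Prop) : forall g1 k1 a b g2 k2 c,
  walk adj g1 k1 a b -> walk adj g2 k2 b c ->
  walk adj (fun i => if i <=? k1 then g1 i else g2 (i - k1)) (k1 + k2) a c.
Proof.
  intros g1 k1 a b g2 k2 c [A0 [A1 A2]] [B0 [B1 B2]]. split; [|split].
  - simpl. exact A0.
  - destruct (Nat.leb_spec (k1 + k2) k1).
    + assert (k2 = 0) by lia. subst k2. rewrite Nat.add_0_r. congruence.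
    + replace (k1 + k2 - k1) with k2 by lia. exact B1.
  - intros i Hi. destruct (Nat.leb_spec i k1); destruct (Nat.leb_spec (S i) k1).
    + apply A2. lia.
    + assert (i = k1) by lia. subst i. replace (S k1 - k1) with 1 by lia.
      rewrite A1, <- B0. apply B2. lia.
    + lia.
    + replace (S i - k1) with (S (i - k1)) by lia. apply B2. lia.
Qed.

Lemma d_tri {V} (adj : V -> V -> Prop) d : path_metric adj d ->
  forall a b c, d a c <= d a b + d b c.
Proof.
  intros Hm a b c. destruct (walk_ex adj d Hm a b) as [g1 H1].
  destruct (walk_ex adj d Hm b c) as [g2 H2].
  exact (walk_le adj d Hm _ _ _ _ (walk_cat adj _ _ _ _ _ _ _ H1 H2)).
Qed.

Lemma d_adj {V} (adj : V -> V -> Prop) d : path_metric adj d ->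
  forall a b, adj a b -> d a b <= 1.
Proof.
  intros Hm a b H. apply (walk_le adj d Hm (fun i => if i =? 0 then a else b)).
  split; [reflexivity|split;[reflexivity|]]. intros i Hi. assert (i = 0) by lia. subst. exact H.
Qed.

Lemma walk_shift {V} (adj : V -> V -> Prop) : forall g k a b i j,
  walk adj g k a b -> i <= j -> j <= k -> walk adj (fun s => g (i + s)) (j - i) (g i) (g j).
Proof.
  intros g k a b i j [H0 [H1 H2]] Hij Hjk. split; [|split].
  - rewrite Nat.add_0_r. reflexivity.
  - f_equal. lia.
  - intros s Hs. replace (i + S s) with (S (i + s)) by lia. apply H2. lia.
Qed.

Lemma geo_dist {V} (adj : V -> V -> Prop) d : path_metric adj d ->
  forall g k a b i j, geodesic adj d g k a b -> i <= j -> j <= k -> d (g i) (g j) = j - i.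
Proof.
  intros Hm g k a b i j [Hw Hk] Hij Hjk.
  pose proof (walk_le adj d Hm _ _ _ _ (walk_shift adj g k a b i j Hw Hij Hjk)).
  pose proof (walk_le adj d Hm _ _ _ _ (walk_shift adj g k a b 0 i Hw ltac:(lia) ltac:(lia))).
  pose proof (walk_le adj d Hm _ _ _ _ (walk_shift adj g k a b j k Hw ltac:(lia) ltac:(lia))).
  destruct Hw as [W0 [W1 _]]. rewrite W0 in *. rewrite W1 in *.
  pose proof (d_tri adj d Hm a (g i) b). pose proof (d_tri adj d Hm (g i) (g j) b). lia.
Qed.

Lemma geo_dist_le {V} (adj : V -> V -> Prop) d : graph_symmetric adj -> path_metric adj d ->
  forall g k a b i j, geodesic adj d g k a b -> i <= k -> j <= k ->
  d (g i) (g j) <= (i - j) + (j - i).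
Proof.
  intros Hs Hm g k a b i j Hg Hi Hj. destruct (Nat.le_ge_cases i j).
  - rewrite (geo_dist adj d Hm g k a b i j Hg); lia.
  - rewrite (d_sym adj d Hs Hm). rewrite (geo_dist adj d Hm g k a b j i Hg); lia.
Qed.

Lemma geo_lev {V} (adj : V -> V -> Prop) d : path_metric adj d ->
  forall g k a b i, geodesic adj d g k a b -> i <= k -> d a (g i) = i.
Proof.
  intros Hm g k a b i Hg Hi. pose proof (geo_dist adj d Hm g k a b 0 i Hg ltac:(lia) Hi).
  destruct Hg as [[H0 _] _]. rewrite H0 in H. lia.
Qed.

Lemma geo_restrict {V} (adj : V -> V -> Prop) d : path_metric adj d ->
  forall g k a b j, geodesic adj d g k a b -> j <= k -> geodesic adj d g j a (g j).
Proof.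
  intros Hm g k a b j Hg Hj. pose proof (geo_lev adj d Hm g k a b j Hg Hj).
  destruct Hg as [[H0 [H1 H2]] Hk]. split; [split;[exact H0|split;[reflexivity|]]|lia].
  intros i Hi. apply H2. lia.
Qed.

Lemma geo_rev {V} (adj : V -> V -> Prop) d : graph_symmetric adj -> path_metric adj d ->
  forall g k a b, geodesic adj d g k a b -> geodesic adj d (fun i => g (k - i)) k b a.
Proof.
  intros Hs Hm g k a b [Hw Hk]. split.
  - apply walk_rev; auto.
  - rewrite (d_sym adj d Hs Hm). exact Hk.
Qed.

Lemma D_exists {V} (adj : V -> V -> Prop) d delta : path_metric adj d ->
  forall (x0 : V), hyperbolic adj d delta ->
  exists D, (INR D <= delta)%R /\ forall k, (INR k <= delta)%R -> k <= D.
Proof.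
  intros Hm x0 Hh.
  assert (Hg : geodesic adj d (fun _ => x0) 0 x0 x0).
  { split; [split;[reflexivity|split;[reflexivity|intros; lia]]|]. rewrite (d_refl adj d Hm). reflexivity. }
  destruct (Hh x0 x0 x0 _ _ _ _ _ _ Hg Hg Hg 0 (le_n 0)) as [j [[_ Hj]|[_ Hj]]];
  rewrite (d_refl adj d Hm) in Hj; simpl in Hj;
  (destruct (base_Int_part delta) as [B1 B2];
   assert (Hz : (-1 < Int_part delta)%Z) by (apply lt_IZR; lra);
   exists (Z.to_nat (Int_part delta));
   assert (HI : INR (Z.to_nat (Int_part delta)) = IZR (Int_part delta))
     by (rewrite INR_IZR_INZ, Z2Nat.id; auto; lia);
   split; [rewrite HI; exact B1|];
   intros k Hk; assert (INR k < INR (S (Z.to_nat (Int_part delta))))%R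
     by (rewrite S_INR, HI; lra);
   apply INR_lt in H; lia).
Qed.

Lemma thin {V} (adj : V -> V -> Prop) d delta D :
  hyperbolic adj d delta -> (forall k, (INR k <= delta)%R -> k <= D) ->
  forall a b c gab kab gac kac gbc kbc,
    geodesic adj d gab kab a b -> geodesic adj d gac kac a c ->
    geodesic adj d gbc kbc b c ->
    forall i, i <= kab ->
      exists j, (j <= kac /\ d (gab i) (gac j) <= D)
             \/ (j <= kbc /\ d (gab i) (gbc j) <= D).
Proof.
  intros Hh HD a b c gab kab gac kac gbc kbc H1 H2 H3 i Hi.
  destruct (Hh a b c gab kab gac kac gbc kbc H1 H2 H3 i Hi) as [j [[A B]|[A B]]];
  exists j; [left|right]; split; auto.
Qed.

Lemma lev_lip {V} (adj : V -> V -> Prop) d : graph_symmetric adj -> path_metric adj d ->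
  forall x0 u v, d x0 u <= d x0 v + d u v.
Proof.
  intros Hs Hm x0 u v. rewrite (d_sym adj d Hs Hm u v). apply (d_tri adj d Hm).
Qed.

Lemma FT {V} (adj : V -> V -> Prop) d delta D : graph_symmetric adj -> path_metric adj d ->
  hyperbolic adj d delta -> (forall k, (INR k <= delta)%R -> k <= D) ->
  forall x0 a b g1 k1 g2 k2 i,
  geodesic adj d g1 k1 x0 a -> geodesic adj d g2 k2 x0 b -> i <= k1 -> i <= k2 ->
  d (g1 i) (g2 i) <= 2 * D + 2 * d a b.
Proof.
  intros Hs Hm Hh HD x0 a b g1 k1 g2 k2 i G1 G2 Hi1 Hi2.
  destruct (geo_ex adj d Hm a b) as [sg Gs].
  pose proof (geo_lev adj d Hm _ _ _ _ i G1 Hi1) as L1.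
  destruct (thin adj d delta D Hh HD _ _ _ _ _ _ _ _ _ G1 G2 Gs i Hi1) as [j [[Hj Hd]|[Hj Hd]]].
  - pose proof (geo_lev adj d Hm _ _ _ _ j G2 Hj) as L2.
    pose proof (lev_lip adj d Hs Hm x0 (g1 i) (g2 j)).
    pose proof (lev_lip adj d Hs Hm x0 (g2 j) (g1 i)).
    rewrite (d_sym adj d Hs Hm (g2 j) (g1 i)) in H0.
    pose proof (d_tri adj d Hm (g1 i) (g2 j) (g2 i)).
    pose proof (geo_dist_le adj d Hs Hm _ _ _ _ j i G2 Hj Hi2). lia.
  - pose proof (geo_dist adj d Hm _ _ _ _ j (d a b) Gs Hj (le_n _)) as E1.
    destruct Gs as [[S0 [S1 _]] _]. rewrite S1 in E1.
    pose proof (geo_dist adj d Hm _ _ _ _ i k2 G2 Hi2 (le_n _)) as E2.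
    destruct G2 as [[T0 [T1 _]] Tk]. rewrite T1 in E2.
    rewrite (d_sym adj d Hs Hm) in E2.
    pose proof (d_tri adj d Hm x0 (sg j) b).
    pose proof (lev_lip adj d Hs Hm x0 (sg j) (g1 i)).
    rewrite (d_sym adj d Hs Hm (sg j) (g1 i)) in H0.
    pose proof (d_tri adj d Hm (g1 i) (sg j) (g2 i)).
    pose proof (d_tri adj d Hm (sg j) b (g2 i)). lia.
Qed.

Lemma least_ex : forall (P : nat -> Prop) N, P N -> exists t, P t /\ forall s, s < t -> ~ P s.
Proof.
  intros P N. induction N as [N IH] using (well_founded_induction lt_wf). intros HN.
  destruct (classic (exists s, s < N /\ P s)) as [[s [Hs Ps]]|Hn].
  - exact (IH s Hs Ps).
  - exists N. split; auto. intros s Hs Ps. apply Hn. eauto.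
Qed.

Lemma max_ex : forall (P : nat -> Prop) n, P 0 ->
  exists js, js <= n /\ P js /\ forall j, js < j -> j <= n -> ~ P j.
Proof.
  intros P n H0. induction n as [|n IH].
  - exists 0. split; [lia|split; auto]. intros; lia.
  - destruct IH as [js [A [B C]]]. destruct (classic (P (S n))).
    + exists (S n). split; [lia|split;auto]. intros; lia.
    + exists js. split; [lia|split;auto]. intros j Hj1 Hj2.
      destruct (Nat.eq_dec j (S n)); [subst; auto|]. apply C; lia.
Qed.

Lemma first_level {V} (adj : V -> V -> Prop) d : graph_symmetric adj -> path_metric adj d ->
  forall x0 n g k z w, walk adj g k z w -> n <= d x0 z -> d x0 w <= n ->
  exists t, t <= k /\ d x0 (g t) = n /\ forall s, s <= t -> n <= d x0 (g s).
Proof.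
  intros Hs Hm x0 n g k z w Hw Hz Hwn.
  destruct Hw as [W0 [W1 W2]].
  destruct (least_ex (fun s => d x0 (g s) <= n) k ltac:(cbv beta; rewrite W1; exact Hwn)) as [t [Pt Ht]].
  assert (Htk : t <= k).
  { destruct (Nat.le_gt_cases t k); auto. exfalso. apply (Ht k H). rewrite W1; exact Hwn. }
  assert (Hlt : forall s, s < t -> n < d x0 (g s)).
  { intros s Hst. specialize (Ht s Hst). lia. }
  exists t. split; auto.
  assert (Hge : n <= d x0 (g t)).
  { destruct t as [|t'].
    - rewrite W0; exact Hz.
    - pose proof (Hlt t' ltac:(lia)).
      pose proof (d_adj adj d Hm _ _ (W2 t' ltac:(lia))).
      pose proof (lev_lip adj d Hs Hm x0 (g t') (g (S t'))). lia. }
  split; [lia|]. intros s Hs'. destruct (Nat.eq_dec s t); [subst; lia|].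
  pose proof (Hlt s ltac:(lia)). lia.
Qed.

Lemma claimP {V} (adj : V -> V -> Prop) d delta D : graph_symmetric adj -> path_metric adj d ->
  hyperbolic adj d delta -> (forall k, (INR k <= delta)%R -> k <= D) ->
  forall x0 n z q g k t beta m gp,
  geodesic adj d g k z q -> t <= k -> (forall s, s <= t -> n <= d x0 (g s)) ->
  d x0 (g t) = n -> geodesic adj d beta m x0 z -> geodesic adj d gp n x0 (g t) ->
  forall i, i <= n -> d (beta i) (gp i) <= 4 * D + 2.
Proof.
  intros Hs Hm Hh HD x0 n z q g k t beta m gp Gg Htk Hlev Hpt Gb Gp.
  pose proof (geo_restrict adj d Hm _ _ _ _ t Gg Htk) as Gg'.
  pose proof (geo_rev adj d Hs Hm _ _ _ _ Gg') as Gr.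
  assert (Hnm : n <= m).
  { pose proof (Hlev 0 (le_0_n _)). destruct Gb as [[B0 [B1 _]] Bk].
    destruct Gg as [[G0 _] _]. rewrite G0 in H. lia. }
  destruct (max_ex (fun j => exists j', j' <= m /\ d (gp j) (beta j') <= D) n) as [js [Hjs [[j' [Hj' Hdj]] Hmax]]].
  { exists 0. split; [lia|]. destruct Gb as [[B0 _] _]. destruct Gp as [[P0 _] _].
    rewrite B0, P0, (d_refl adj d Hm). lia. }
  assert (Hjn : n <= js + 1 + D).
  { destruct (Nat.eq_dec js n); [lia|].
    destruct (thin adj d delta D Hh HD _ _ _ _ _ _ _ _ _ Gp Gb Gr (S js) ltac:(lia)) as [j [[Hj Hd]|[Hj Hd]]].
    - exfalso. apply (Hmax (S js)); [lia|lia|]. exists j. auto.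
    - pose proof (Hlev (t - j) ltac:(lia)).
      pose proof (geo_lev adj d Hm _ _ _ _ (S js) Gp ltac:(lia)).
      pose proof (lev_lip adj d Hs Hm x0 (g (t - j)) (gp (S js))).
      rewrite (d_sym adj d Hs Hm (g (t - j)) (gp (S js))) in H1. lia. }
  pose proof (geo_lev adj d Hm _ _ _ _ js Gp Hjs) as Ljs.
  pose proof (geo_lev adj d Hm _ _ _ _ j' Gb Hj') as Lj'.
  pose proof (lev_lip adj d Hs Hm x0 (gp js) (beta j')).
  pose proof (lev_lip adj d Hs Hm x0 (beta j') (gp js)).
  rewrite (d_sym adj d Hs Hm (beta j') (gp js)) in H0.
  intros i Hi.
  destruct (le_dec i js) as [Hijs|Hijs]; [destruct (le_dec i j') as [Hij'|Hij']|].
  - pose proof (FT adj d delta D Hs Hm Hh HD x0 _ _ beta j' gp js i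
      (geo_restrict adj d Hm _ _ _ _ j' Gb Hj') (geo_restrict adj d Hm _ _ _ _ js Gp Hjs) Hij' Hijs).
    rewrite (d_sym adj d Hs Hm (beta j') (gp js)) in H1. lia.
  - pose proof (d_tri adj d Hm (beta i) (beta j') (gp i)).
    pose proof (d_tri adj d Hm (beta j') (gp js) (gp i)).
    pose proof (geo_dist_le adj d Hs Hm _ _ _ _ i j' Gb ltac:(lia) Hj').
    pose proof (geo_dist_le adj d Hs Hm _ _ _ _ js i Gp Hjs Hi).
    rewrite (d_sym adj d Hs Hm (beta j') (gp js)) in H2. lia.
  - pose proof (d_tri adj d Hm (beta i) (beta j') (gp i)).
    pose proof (d_tri adj d Hm (beta j') (gp js) (gp i)).
    pose proof (geo_dist_le adj d Hs Hm _ _ _ _ i j' Gb ltac:(lia) Hj').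
    pose proof (geo_dist_le adj d Hs Hm _ _ _ _ js i Gp Hjs Hi).
    rewrite (d_sym adj d Hs Hm (beta j') (gp js)) in H2. lia.
Qed.

Lemma neigh_list {V} (adj : V -> V -> Prop) : locally_finite adj ->
  forall l : list V, exists L, forall x y, In x l -> adj x y -> In y L.
Proof.
  intros Hlf l. induction l as [|a l [L HL]].
  - exists nil. intros x y [].
  - destruct (Hlf a) as [La HLa]. exists (La ++ L). intros x y [Hx|Hx] Hxy; apply in_or_app.
    + subst. left. auto.
    + right. eauto.
Qed.

Lemma ball_finite {V} (adj : V -> V -> Prop) d : locally_finite adj -> path_metric adj d ->
  forall x0 n, exists l, forall y, d x0 y <= n -> In y l.
Proof.
  intros Hlf Hm x0 n. induction n as [|n [l Hl]].
  - exists (x0 :: nil). intros y Hy. left. apply (d_zero adj d Hm). lia.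
  - destruct (neigh_list adj Hlf l) as [L HL]. exists (l ++ L). intros y Hy. apply in_or_app.
    destruct (le_dec (d x0 y) n); [left; auto|right].
    destruct (geo_ex adj d Hm x0 y) as [g Gg].
    pose proof (geo_lev adj d Hm _ _ _ _ n Gg ltac:(lia)).
    destruct Gg as [[G0 [G1 G2]] _].
    apply (HL (g n)). apply Hl. lia.
    replace (d x0 y) with (S n) in G1 by lia. rewrite <- G1. apply G2. lia.
Qed.
Open Scope R_scope.

Theorem mainTheorem17 (V : Type) (adj : V -> V -> Prop) (d : V -> V -> nat)
  (delta : R) (x0 : V) (n : nat) (A : V -> Prop) (x : V) :
  graph_symmetric adj -> graph_irreflexive adj ->
  locally_finite adj -> connected adj -> path_metric adj d ->
  hyperbolic adj d delta ->
  infinite_atom d x0 n A ->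
  (A x <->
    ((forall y, A y -> forall p, nearest d (ball d x0 n) y p -> cone d x0 p x) /\
     (forall y, A y -> exists c : Z,
        forall p, proximal adj d delta x0 n y p ->
          (Z.of_nat (d x p) - Z.of_nat (d y p))%Z = c))).
Proof.
  intros Hs Hirr Hlf Hconn Hm Hh [[z0 HA] Hinf].
  destruct (D_exists adj d delta Hm x0 Hh) as [D [HD1 HD2]].
  assert (Hb0 : ball d x0 n x0) by (unfold ball; rewrite (d_refl adj d Hm); lia).
  split.
  - intro Ax. destruct (proj1 (HA x) Ax) as [cx Hcx]. split.
    + intros y Ay p [Hbp Hnp]. unfold cone.
      destruct (proj1 (HA y) Ay) as [cy Hcy].
      assert (Hyc : (d x0 y = d x0 p + d p y)%nat).
      { destruct (le_lt_dec n (d x0 y)) as [Hl|Hl].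
        - destruct (geo_ex adj d Hm x0 y) as [g Gg].
          pose proof (geo_lev adj d Hm _ _ _ _ n Gg Hl).
          pose proof (geo_dist adj d Hm _ _ _ _ n (d x0 y) Gg Hl (le_n _)).
          destruct Gg as [[G0 [G1 _]] _]. rewrite G1 in H0.
          assert (Hb : ball d x0 n (g n)) by (unfold ball; lia).
          pose proof (Hnp (g n) Hb). pose proof (d_tri adj d Hm x0 p y).
          unfold ball in Hbp. lia.
        - assert (Hb : ball d x0 n y) by (unfold ball; lia).
          pose proof (Hnp y Hb). rewrite (d_refl adj d Hm) in H.
          assert (p = y) by (apply (d_zero adj d Hm); lia). subst p.
          rewrite (d_refl adj d Hm). lia. }
      pose proof (Hcx x0 Hb0). pose proof (Hcy x0 Hb0).
      pose proof (Hcx p Hbp). pose proof (Hcy p Hbp).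
      rewrite (d_sym adj d Hs Hm x x0), (d_sym adj d Hs Hm y x0), (d_sym adj d Hs Hm y p), (d_sym adj d Hs Hm x p) in *.
      lia.
    + intros y Ay. destruct (proj1 (HA y) Ay) as [cy Hcy]. exists (cx - cy)%Z.
      intros p [Hsp _]. assert (Hb : ball d x0 n p) by (unfold ball, sphere in *; lia).
      pose proof (Hcx p Hb). pose proof (Hcy p Hb). lia.
  - intros [H1 H2].
    assert (Hy : exists y, A y /\ (n <= d x0 y)%nat).
    { destruct (classic (exists y, A y /\ (n <= d x0 y)%nat)) as [E|E]; auto.
      exfalso. apply Hinf. destruct (ball_finite adj d Hlf Hm x0 n) as [l Hl].
      exists l. intros y Ay. apply Hl. destruct (le_lt_dec n (d x0 y)); [|lia].
      exfalso. apply E. eauto. }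
    destruct Hy as [y [Ay Hny]].
    apply (proj2 (HA x)). destruct (proj1 (HA y) Ay) as [cy Hcy].
    destruct (H2 y Ay) as [c Hc].
    enough (Hxy : forall b, ball d x0 n b -> (Z.of_nat (d x b) - Z.of_nat (d y b))%Z = c).
    { exists (c + cy)%Z. intros b Hb. specialize (Hxy b Hb). specialize (Hcy b Hb). lia. }
    assert (Hnear : forall al, geodesic adj d al (d x0 y) x0 y -> nearest d (ball d x0 n) y (al n)).
    { intros al Gal. pose proof (geo_lev adj d Hm _ _ _ _ n Gal Hny).
      pose proof (geo_dist adj d Hm _ _ _ _ n (d x0 y) Gal Hny (le_n _)).
      destruct Gal as [[G0 [G1 _]] _]. rewrite G1 in H0.
      split; [unfold ball; lia|]. intros q Hq. unfold ball in Hq.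
      pose proof (d_tri adj d Hm x0 q y). lia. }
    assert (Hnx : (n <= d x0 x)%nat).
    { destruct (geo_ex adj d Hm x0 y) as [al Gal].
      pose proof (H1 y Ay (al n) (Hnear al Gal)). unfold cone in H.
      destruct (Hnear al Gal) as [Hb _]. unfold ball in Hb.
      pose proof (geo_lev adj d Hm _ _ _ _ n Gal Hny). lia. }
    set (good := fun z => forall al, geodesic adj d al (d x0 y) x0 y ->
       exists be, geodesic adj d be (d x0 z) x0 z /\ forall i, (i <= n)%nat -> be i = al i).
    assert (Gy : good y) by (intros al Gal; exists al; split; auto).
    assert (Gx : good x).
    { intros al Gal. pose proof (H1 y Ay (al n) (Hnear al Gal)) as Hc1. unfold cone in Hc1.
      pose proof (geo_lev adj d Hm _ _ _ _ n Gal Hny) as Ln.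
      destruct (geo_ex adj d Hm (al n) x) as [h Gh].
      pose proof (geo_restrict adj d Hm _ _ _ _ n Gal Hny) as Gal'.
      exists (fun i => if (i <=? n)%nat then al i else h (i - n)%nat). split.
      - split.
        + rewrite Hc1, Ln. destruct Gal' as [W _]. destruct Gh as [W' _].
          exact (walk_cat adj _ _ _ _ _ _ _ W W').
        + reflexivity.
      - intros i Hi. destruct (Nat.leb_spec i n); [reflexivity|lia]. }
    assert (KL : forall z, (n <= d x0 z)%nat -> good z -> forall q, d x0 q = n ->
        exists p, proximal adj d delta x0 n y p /\ d z q = (d z p + d p q)%nat).
    { intros z Hz Gz q Hq.
      destruct (geo_ex adj d Hm z q) as [g Gg].
      destruct (first_level adj d Hs Hm x0 n g (d z q) z q (proj1 Gg) Hz ltac:(lia))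
        as [t [Ht [Hpt Hlev]]].
      exists (g t). split.
      - split; [exact Hpt|].
        destruct (geo_ex adj d Hm x0 (g t)) as [gp Gp]. rewrite Hpt in Gp.
        exists gp. split; [exact Gp|]. intros gy Gy' i Hi.
        destruct (Gz gy Gy') as [be [Gbe Hbe]].
        pose proof (claimP adj d delta D Hs Hm Hh HD2 x0 n z q g (d z q) t be (d x0 z) gp
          Gg Ht Hlev Hpt Gbe Gp i Hi) as HP.
        rewrite Hbe in HP by exact Hi.
        apply le_INR in HP. rewrite plus_INR, mult_INR in HP. simpl in HP. lra.
      - pose proof (geo_dist adj d Hm _ _ _ _ 0 t Gg (le_0_n _) Ht).
        pose proof (geo_dist adj d Hm _ _ _ _ t (d z q) Gg Ht (le_n _)).
        destruct Gg as [[G0 [G1 _]] _]. rewrite G0 in H. rewrite G1 in H0. lia. }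
    assert (HS : forall q, d x0 q = n -> (Z.of_nat (d x q) - Z.of_nat (d y q))%Z = c).
    { intros q Hq.
      destruct (KL y Hny Gy q Hq) as [py [Py Ey]].
      destruct (KL x Hnx Gx q Hq) as [px [Px Ex]].
      pose proof (Hc py Py). pose proof (Hc px Px).
      pose proof (d_tri adj d Hm x py q). pose proof (d_tri adj d Hm y px q). lia. }
    assert (Hdec : forall z, (n <= d x0 z)%nat -> forall b, ball d x0 n b ->
       exists q, d x0 q = n /\ d z b = (d z q + d q b)%nat).
    { intros z Hz b Hb. destruct (geo_ex adj d Hm z b) as [g Gg].
      destruct (first_level adj d Hs Hm x0 n g (d z b) z b (proj1 Gg) Hz Hb)
        as [t [Ht [Hpt _]]].
      exists (g t). split; auto.
      pose proof (geo_dist adj d Hm _ _ _ _ 0 t Gg (le_0_n _) Ht).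
      pose proof (geo_dist adj d Hm _ _ _ _ t (d z b) Gg Ht (le_n _)).
      destruct Gg as [[G0 [G1 _]] _]. rewrite G0 in H. rewrite G1 in H0. lia. }
    intros b Hb.
    destruct (Hdec y Hny b Hb) as [qy [Qy Ey]].
    destruct (Hdec x Hnx b Hb) as [qx [Qx Ex]].
    pose proof (HS qy Qy). pose proof (HS qx Qx).
    pose proof (d_tri adj d Hm x qy b). pose proof (d_tri adj d Hm y qx b). lia.
Qed.
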